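(* Let $D$ be a digraph with $n$ nodes. If $D$ contains no arcs, or if $n\in\{1,2\}$, then the burning number of $D$ equals $n$. If $n>2$ and $D$ has at least one arc, then the burning number of $D$ is at most $n-1$, and this bound is sharp: for every $n>2$ there exists a digraph with $n$ nodes and at least one arc whose burning number equals $n-1$.
   Context: Burning process on a digraph $D$: a sequence $(x_1,\ldots,x_b)$ of nodes is a burning sequence for $D$ if after $b$ steps of the following process every node of $D$ is burned; the $i$-th step consists of first burning all out-neighbours of all currently burned nodes, and then burning the node $x_i$ (so after the first step only $x_1$ is burned). The burning number of $D$ is the length of a shortest burning sequence for $D$. Equivalently, writing $N^+_k(v)$ for the set of nodes reachable from $v$ by a directed path with at most $k$ arcs (so $N^+_0(v)=\{v\}$), the burning number is the least $b$ for which there are nodes $v_1,\ldots,v_b$ with $V(D)=\bigcup_{i=1}^b N^+_{i-1}(v_i)$. *)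

(* Defs.v *)
From mathcomp Require Import all_boot.
Set Implicit Arguments. Unset Strict Implicit. Unset Printing Implicit Defensive.

(* A (finite) digraph is a finite node type T with an arc relation e : rel T;
   arcs are ordered pairs (x, y) with e x y.  Digraphs are loopless:
   the statements below assume [irreflexive e]. *)

Definition out_ball (T : finType) (e : rel T) (k : nat) (v u : T) : Prop :=
  exists p : seq T, [&& path e v p, last v p == u & size p <= k].

(* s = (x_1, ..., x_b) is a burning sequence: V(D) = \bigcup_i N^+_{i-1}(x_i)
   (with 0-based index i here: N^+_i(nth i s)). *)
Definition burning_seq (T : finType) (e : rel T) (s : seq T) : Prop :=
  forall x : T, exists i, i < size s /\ out_ball e i (nth x s i) x.

Definition is_burning_number (T : finType) (e : rel T) (b : nat) : Prop :=
  (exists s : seq T, size s = b /\ burning_seq e s) /\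
  (forall s : seq T, burning_seq e s -> b <= size s).

(* Main.v *)
Require Import Defs.
From mathcomp Require Import all_boot.
Set Implicit Arguments. Unset Strict Implicit.

Section Aux.
Variables (T : finType) (e : rel T).

Lemma cover_le (A : {set T}) (s : seq T) :
  (forall k v u, out_ball e k v u -> u \in A -> u = v) ->
  burning_seq e s -> #|A| <= size s.
Proof.
move=> H Hs; apply: leq_trans (card_size s); apply: subset_leq_card.
apply/subsetP => z zA; have [i [Hi Hb]] := Hs z.
by rewrite [X in X \in _](H _ _ _ Hb zA); apply: mem_nth.
Qed.

Lemma ball0 v u : out_ball e 0 v u -> u = v.
Proof. by case=> [[|a p]] /and3P [_ /eqP <-]. Qed.

Lemma ball_refl k v : out_ball e k v v.
Proof. by exists [::]; rewrite /= eqxx. Qed.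

Lemma enum_burn : burning_seq e (enum T).
Proof.
move=> x; exists (index x (enum T)); split; first by rewrite index_mem mem_enum.
by rewrite nth_index ?mem_enum //; apply: ball_refl.
Qed.

Lemma seq_exists x y : irreflexive e -> 2 < #|T| -> e x y ->
  exists s, size s = #|T| - 1 /\ burning_seq e s.
Proof.
move=> irr n2 exy.
have xy : x != y by apply/eqP => E; move: exy; rewrite E irr.
set r := enum (~: [set x; y]).
have sr : size r = #|T| - 2 by rewrite /r -cardE cardsCs setCK cards2 xy.
exists (rcons r x); split; first by rewrite size_rcons sr; case: #|T| n2 => [|[|[|m]]].
move=> z; case: (boolP (z \in r)) => zr.
  exists (index z r); split; first by rewrite size_rcons ltnS index_size.
  by rewrite nth_rcons index_mem zr nth_index //; apply: ball_refl.
exists (size r); split; first by rewrite size_rcons.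
rewrite nth_rcons ltnn eqxx.
move: zr; rewrite /r mem_enum !inE negbK => /orP [/eqP -> | /eqP ->].
  by apply: ball_refl.
exists [:: y]; rewrite /= exy eqxx sr /=; by case: #|T| n2 => [|[|[|m]]].
Qed.

End Aux.

Theorem mainTheorem1 :
  (forall (T : finType) (e : rel T), irreflexive e ->
     ((forall x y : T, ~~ e x y) \/ #|T| = 1 \/ #|T| = 2) ->
     is_burning_number e #|T|) /\
  (forall (T : finType) (e : rel T), irreflexive e ->
     2 < #|T| -> (exists x y : T, e x y) ->
     forall b, is_burning_number e b -> b <= #|T| - 1) /\
  (forall n : nat, 2 < n ->
     exists e : rel 'I_n, [/\ irreflexive e, (exists x y : 'I_n, e x y) &
                             is_burning_number e (n - 1)]).
Proof.
split.
  move=> T e irr H; split; first by exists (enum T); rewrite -cardE; split => //; apply: enum_burn.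
  move=> s Hs; case: H => [H | [H1 | H2]].
  - rewrite -cardsT; apply: (@cover_le _ e) Hs => k v u [[|a p] /and3P [Hp /eqP <- _]] _ //.
    by move: Hp => /= /andP [Hva _]; move: (H v a); rewrite Hva.
  - rewrite H1; case: (pickP T) => [x _|]; last by move=> P; move: H1; rewrite eq_card0.
    by have [i [Hi _]] := Hs x; case: (size s) Hi.
  - rewrite H2; case: s Hs => [|a [|b s]] Hs //.
      case: (pickP T) => [x _|]; last by move=> P; move: H2; rewrite eq_card0.
      by have [i [Hi _]] := Hs x.
    suff: #|T| <= 1 by rewrite H2.
    have: [set: T] \subset [set a].
      apply/subsetP => z _; have [[|i] [Hi Hb]] := Hs z => //.
      by rewrite inE (ball0 Hb).
    by move/subset_leq_card; rewrite cardsT cards1.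
split.
  move=> T e irr n2 [x [y exy]] b [_ Hb].
  have [s [<- Hs]] := seq_exists irr n2 exy; exact: Hb.
move=> n n2.
have h0 : 0 < n by apply: ltn_trans n2.
have h1 : 1 < n by apply: ltn_trans n2.
pose o0 := Ordinal h0; pose o1 := Ordinal h1.
pose e := fun a b : 'I_n => (val a == 0) && (val b == 1).
have irr : irreflexive e by move=> a; rewrite /e; case: (val a) => [|[|]].
have e01 : e o0 o1 by [].
exists e; split => //; first by exists o0, o1.
split.
  have n2' : 2 < #|'I_n| by rewrite card_ord.
  by have [s [Hsz Hs]] := seq_exists irr n2' e01; exists s; rewrite card_ord in Hsz.
move=> s Hs.
have -> : n - 1 = #|~: [set o1]| by rewrite cardsC1 card_ord subn1.
apply: (@cover_le _ e) Hs => k v u [[|a p] /and3P [Hp /eqP <- _]] //.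
rewrite !inE => /eqP Hne; exfalso; apply: Hne.
move: Hp => /= /andP [/andP [_ Ha] Hp].
case: p Hp => [|b p] /=; first by move=> _; apply/eqP; rewrite -val_eqE /= (eqP Ha).
by rewrite /e (eqP Ha).
Qed.
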